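(* Let $\mathcal Y$ be finite, $X\sim\mathbb P_X$ on $\mathcal X$, $r:\mathcal X\times\mathcal Y\to[0,\infty)$ bounded with $\|r\|_\infty=\sup_{x,y}r(x,y)$, and $g:\mathcal X\times[K]\to[0,1]$ with $\mathbb E_X[g(X,k)]>0$ for all $k$. Let $\mathcal C=\{(y_c,\mathcal I_c)\}_{c\in[C]}$ and $\alpha\in[0,1]$. Let $\mathrm{OPT}$ be the optimal value of the Primal LP$(r,g,\mathbb P_X,\mathcal C,\alpha)$. 1. For any $\hat r:\mathcal X\times\mathcal Y\to[0,\infty)$, let $\varepsilon_{\hat r}=\mathbb E_X\big[\sum_{y\in\mathcal Y}|\hat r(X,y)-r(X,y)|\big]$. If $\hat\pi$ is a minimizer of the Primal LP$(\hat r,g,\mathbb P_X,\mathcal C,\alpha)$, then $\mathbb E_X\big[\sum_{y}r(X,y)\hat\pi(X,y)\big]\le\mathrm{OPT}+\varepsilon_{\hat r}$. 2. For any $\hat g:\mathcal X\times[K]\to[0,1]$ with $\mathbb E_X[\hat g(X,k)]>0$ for all $k$, let $$\varepsilon_{\hat g}=\max_{k\in[K]}\mathbb E_X\Big[\Big|\frac{\hat g(X,k)}{\mathbb E_X[\hat g(X,k)]}-\frac{g(X,k)}{\mathbb E_X[g(X,k)]}\Big|\Big];$$ then $\varepsilon_{\hat g}\le\max_{k\in[K]}\frac{2\mathbb E_X[|\hat g(X,k)-g(X,k)|]}{\mathbb E_X[g(X,k)]}$. If $\hat\pi$ is a minimizer of the Primal LP$(r,\hat g,\mathbb P_X,\mathcal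 C,\alpha)$, then $$\mathbb E_X\Big[\sum_{y}r(X,y)\hat\pi(X,y)\Big]\le\mathrm{OPT}+2\|r\|_\infty\min\Big(1-\alpha,\frac{\varepsilon_{\hat g}}{\alpha+\varepsilon_{\hat g}}\Big)$$ (with the convention $0/0:=0$), and for all $c\in[C]$, $$\max_{k,k'\in\mathcal I_c}\Big|\mathbb E_X\Big[\Big(\frac{g(X,k)}{\mathbb E_X[g(X,k)]}-\frac{g(X,k')}{\mathbb E_X[g(X,k')]}\Big)\hat\pi(X,y_c)\Big]\Big|\le\min(1,\alpha+\varepsilon_{\hat g}).$$
   Context: Primal LP$(r,g,P,\mathcal C,\alpha)$ for a distribution $P$ on $\mathcal X$, $r:\mathcal X\times\mathcal Y\to[0,\infty)$, $g:\mathcal X\times[K]\to[0,1]$, constraints $\mathcal C=\{(y_c,\mathcal I_c)\}_{c\in[C]}$ ($y_c\in\mathcal Y$, $\mathcal I_c\subseteq[K]$) and $\alpha\in[0,1]$: minimize over $\pi:\mathcal X\times\mathcal Y\to[0,\infty)$ and $q\in\mathbb R^C$ the objective $\mathbb E_{X\sim P}[\sum_{y\in\mathcal Y}r(X,y)\pi(X,y)]$ subject to $\sum_{y}\pi(x,y)=1$ for all $x\in\mathcal X$ and $\big|\mathbb E_{X\sim P}\big[\frac{g(X,k)}{\mathbb E_{X\sim P}[g(X,k)]}\pi(X,y_c)\big]-q_c\big|\le\alpha/2$ for all $c\in[C]$, $k\in\mathcal I_c$. A feasible $\pi$ represents a randomized classifier with $\pi(x,y)=\Pr(h(X)=y\mid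 X=x)$. When $g(x,k)=\Pr(Z_k=1\mid X=x)$ and $P$ is the law of $X$, the normalizer equals $\Pr(Z_k=1)$ and the constraints are $\alpha$-group fairness. *)

(* Defs.v *)
From HB Require Import structures.
From mathcomp Require Import all_boot all_order all_algebra.
From mathcomp Require Import all_classical all_reals all_analysis.
Set Implicit Arguments. Unset Strict Implicit. Unset Printing Implicit Defensive.
Import Order.TTheory GRing.Theory Num.Theory.
Local Open Scope ring_scope.
Local Open Scope classical_set_scope.

Section LP.
Context {d : measure_display} {T : measurableType d} {R : realType}
  {Y : finType} {K C : nat}.

(* Real-valued expectation, used only for bounded measurable integrands. *)
Definition Ex (P : probability T R) (f : T -> R) : R :=
  fine (\int[P]_x (f x)%:E)%E.

Definition lp_obj (P : probability T R) (r : T -> Y -> R) (pi : T -> Y -> R)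
  : \bar R := (\int[P]_x (\sum_(y : Y) r x y * pi x y)%:E)%E.

Definition lp_feasible (P : probability T R) (g : T -> 'I_K -> R)
  (yc : 'I_C -> Y) (Ic : 'I_C -> {set 'I_K}) (alpha : R) (pi : T -> Y -> R)
  : Prop :=
  [/\ (forall x y, 0 <= pi x y),
      (forall x, \sum_(y : Y) pi x y = 1),
      (forall y, measurable_fun setT (fun x => pi x y)) &
      exists q : 'I_C -> R, forall c k, k \in Ic c ->
        `| Ex P (fun x => g x k / Ex P (fun z => g z k) * pi x (yc c)) - q c |
          <= alpha / 2].

Definition lp_opt (P : probability T R) (r : T -> Y -> R) (g : T -> 'I_K -> R)
  (yc : 'I_C -> Y) (Ic : 'I_C -> {set 'I_K}) (alpha : R) : \bar R :=
  ereal_inf [set lp_obj P r pi | pi in lp_feasible P g yc Ic alpha].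

Definition lp_minimizer (P : probability T R) (r : T -> Y -> R)
  (g : T -> 'I_K -> R) (yc : 'I_C -> Y) (Ic : 'I_C -> {set 'I_K}) (alpha : R)
  (pi : T -> Y -> R) : Prop :=
  lp_feasible P g yc Ic alpha pi /\
  forall pi', lp_feasible P g yc Ic alpha pi' ->
    (lp_obj P r pi <= lp_obj P r pi')%E.

Definition eps_r (P : probability T R) (rh r : T -> Y -> R) : \bar R :=
  (\int[P]_x (\sum_(y : Y) `|rh x y - r x y|)%:E)%E.

Definition eps_g (P : probability T R) (gh g : T -> 'I_K -> R) : R :=
  \big[Num.max/0]_(k < K)
    Ex P (fun x => `| gh x k / Ex P (fun z => gh z k)
                      - g x k / Ex P (fun z => g z k) |).

Definition sup_norm (r : T -> Y -> R) : R :=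
  sup [set r x y | x in [set: T] & y in [set: Y]].

End LP.

(* Main.v *)
Require Import Defs.
From HB Require Import structures.
From mathcomp Require Import all_boot all_order all_algebra.
From mathcomp Require Import all_classical all_reals all_analysis.
From mathcomp Require Import lra ring measurable_realfun.
Import Order.TTheory GRing.Theory Num.Theory.
Local Open Scope ring_scope.
Local Open Scope classical_set_scope.

Section H.
Context {d : measure_display} {T : measurableType d} {R : realType}.
Variable P : probability T R.

Definition bm (f : T -> R) := measurable_fun setT f /\ exists M : R, forall x, `|f x| <= M.

Lemma bm_int f : bm f -> P.-integrable setT (EFin \o f).
Proof.
move=> [mf [M hM]]; apply: measurable_bounded_integrable => //.
  idtac.
  by rewrite -ge0_fin_numE // fin_num_measure.
exists M; split; first by rewrite num_real.
move=> M' HM' x _ /=; exact: le_trans (hM x) (ltW HM').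
Qed.

Lemma ExE f : Ex P f = Rintegral P setT f.
Proof. by []. Qed.

Lemma bm_cst c : bm (fun=> c).
Proof. by split; [exact: measurable_cst| exists `|c|]. Qed.

Lemma bmD f g : bm f -> bm g -> bm (fun x => f x + g x).
Proof.
move=> [mf [M hM]] [mg [N hN]]; split; first exact: measurable_funD.
exists (M + N) => x; apply: le_trans (ler_normD _ _) _; exact: lerD.
Qed.

Lemma bmM f g : bm f -> bm g -> bm (fun x => f x * g x).
Proof.
move=> [mf [M hM]] [mg [N hN]]; split; first exact: measurable_funM.
exists (M * N) => x; rewrite normrM; apply: ler_pM => //.
Qed.

Lemma bmN f : bm f -> bm (fun x => - f x).
Proof.
move=> [mf [M hM]]; split; first exact: measurableT_comp.
by exists M => x; rewrite normrN.
Qed.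

Lemma bmB f g : bm f -> bm g -> bm (fun x => f x - g x).
Proof. by move=> bf bg; apply: bmD => //; exact: bmN. Qed.

Lemma bm_norm f : bm f -> bm (fun x => `|f x|).
Proof.
move=> [mf [M hM]]; split; first exact: measurableT_comp.
by exists M => x; rewrite normr_id.
Qed.

Lemma bm_sum (I : finType) (F : I -> T -> R) : (forall i, bm (F i)) ->
  bm (fun x => \sum_(i : I) F i x).
Proof.
move=> hF; split; first by apply: measurable_sum => i; case: (hF i).
have [M hM] : exists M : I -> R, forall i x, `|F i x| <= M i.
  by exists (fun i => xget 0 [set M | forall x, `|F i x| <= M]) => i x;
   case: xgetP => [M -> /(_ x)//|]; case: (hF i) => _ [M hM] /(_ M).
exists (\sum_i M i) => x; apply: le_trans (ler_norm_sum _ _ _) _.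
by apply: ler_sum => i _.
Qed.

Lemma ExD f g : bm f -> bm g -> Ex P (fun x => f x + g x) = Ex P f + Ex P g.
Proof. by move=> /bm_int hf /bm_int hg; rewrite !ExE RintegralD. Qed.

Lemma ExB f g : bm f -> bm g -> Ex P (fun x => f x - g x) = Ex P f - Ex P g.
Proof. by move=> /bm_int hf /bm_int hg; rewrite !ExE RintegralB. Qed.

Lemma ExZ c f : bm f -> Ex P (fun x => c * f x) = c * Ex P f.
Proof. by move=> /bm_int hf; rewrite !ExE RintegralZl. Qed.

Lemma ExZr c f : bm f -> Ex P (fun x => f x * c) = Ex P f * c.
Proof. by move=> /bm_int hf; rewrite !ExE RintegralZr. Qed.

Lemma Ex_cst c : Ex P (fun=> c) = c.
Proof. rewrite ExE Rintegral_cst //. exact: (etrans (congr1 (fun z => c * fine z) (probability_setT P))) (mulr1 c). Qed.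

Lemma Ex_le f g : bm f -> bm g -> (forall x, f x <= g x) -> Ex P f <= Ex P g.
Proof. by move=> /bm_int hf /bm_int hg fg; rewrite !ExE le_Rintegral. Qed.

Lemma Ex_norm f : bm f -> `|Ex P f| <= Ex P (fun x => `|f x|).
Proof. by move=> /bm_int hf; rewrite !ExE le_normr_Rintegral. Qed.

Lemma Ex_ge0 f : (forall x, 0 <= f x) -> 0 <= Ex P f.
Proof. by move=> hf; rewrite ExE Rintegral_ge0. Qed.


Lemma Ex_ext f g : (forall x, f x = g x) -> Ex P f = Ex P g.
Proof. by move=> fg; congr Ex; apply: funext. Qed.

Lemma half_lemma f p : bm f -> bm p -> Ex P f = 0 -> (forall x, 0 <= p x <= 1) ->
  `|Ex P (fun x => f x * p x)| <= Ex P (fun x => `|f x|) / 2.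
Proof.
move=> bf bp Ef0 hp.
have e : Ex P (fun x => f x * p x) = Ex P (fun x => f x * (p x - 2^-1)).
  rewrite (Ex_ext (fun x => f x * (p x - 2^-1)) (fun x => f x * p x - f x * 2^-1)); last by move=> x; rewrite mulrBr.
  by rewrite ExB ?ExZr ?Ef0 ?mul0r ?subr0 //; [exact: bmM|exact: bmM (bm_cst _)].
have bq : bm (fun x => f x * (p x - 2^-1)).
  by apply: bmM => //; apply: bmB => //; exact: bm_cst.
rewrite e; apply: (le_trans (Ex_norm _ bq)).
rewrite -ExZr; last exact: bm_norm.
apply: Ex_le.
- by apply: bm_norm; apply: bmM => //; apply: bmB => //; exact: bm_cst.
- by apply: bmM; [exact: bm_norm|exact: bm_cst].
move=> x; rewrite normrM ler_wpM2l //.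
have /andP[h0 h1] := hp x.
rewrite ler_norml; apply/andP; split; lra.
Qed.

Lemma le_inf_add (S : set \bar R) (a e : \bar R) : e \is a fin_num ->
  (forall z, S z -> (a <= z + e)%E) -> (a <= ereal_inf S + e)%E.
Proof.
move=> fe h; rewrite -leeBlDr //; apply/ereal_infP => z Sz.
by rewrite leeBlDr // h.
Qed.

Definition nrm (G : T -> R) := fun x => G x / Ex P G.

Lemma bm_nrm G : bm G -> bm (nrm G).
Proof. by move=> bG; apply: bmM => //; exact: bm_cst. Qed.

Lemma Ex_nrm G : bm G -> 0 < Ex P G -> Ex P (nrm G) = 1.
Proof. by move=> bG h; rewrite /nrm ExZr // mulfV // gt_eqF. Qed.

Lemma vw_lemma G H p : bm G -> bm H -> 0 < Ex P G -> 0 < Ex P H ->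
  bm p -> (forall x, 0 <= p x <= 1) ->
  `|Ex P (fun x => nrm H x * p x) - Ex P (fun x => nrm G x * p x)|
    <= Ex P (fun x => `|nrm H x - nrm G x|) / 2.
Proof.
move=> bG bH hG hH bp hp.
have bnG := bm_nrm _ bG; have bnH := bm_nrm _ bH.
rewrite -ExB; [|exact: bmM|exact: bmM].
rewrite (Ex_ext (fun x => nrm H x * p x - nrm G x * p x) (fun x => (nrm H x - nrm G x) * p x)); last by move=> x; rewrite mulrBl.
apply: half_lemma => //; first exact: bmB.
by rewrite ExB // !Ex_nrm // subrr.
Qed.

Lemma nrm_p01 G p : bm G -> 0 < Ex P G -> (forall x, 0 <= G x) ->
  bm p -> (forall x, 0 <= p x <= 1) ->
  0 <= Ex P (fun x => nrm G x * p x) <= 1.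
Proof.
move=> bG hG G0 bp hp; apply/andP; split.
  apply: Ex_ge0 => x; apply: mulr_ge0; last by case/andP: (hp x).
  by rewrite /nrm divr_ge0 // ltW.
rewrite -(Ex_nrm _ bG hG); apply: Ex_le; [apply: bmM => //; exact: bm_nrm|exact: bm_nrm|].
move=> x; rewrite ler_piMr //; first by rewrite /nrm divr_ge0 // ltW.
by case/andP: (hp x).
Qed.


Local Open Scope ereal_scope.

Lemma int_add (f g : T -> R) : measurable_fun setT f -> measurable_fun setT g ->
  (forall x, (0 <= f x)%R) -> (forall x, (0 <= g x)%R) ->
  \int[P]_x (f x + g x)%:E = \int[P]_x (f x)%:E + \int[P]_x (g x)%:E.
Proof.
move=> mf mg f0 g0.
under eq_integral do rewrite EFinD.
apply: ge0_integralD => //; try (by move=> x _; rewrite lee_fin);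
  exact/measurable_EFinP.
Qed.

Lemma int_le (f g : T -> R) : measurable_fun setT f -> measurable_fun setT g ->
  (forall x, (0 <= f x)%R) -> (forall x, (f x <= g x)%R) ->
  \int[P]_x (f x)%:E <= \int[P]_x (g x)%:E.
Proof.
move=> mf mg f0 fg; apply: ge0_le_integral => //.
- by move=> x _; rewrite lee_fin.
- exact/measurable_EFinP.
- exact/measurable_EFinP.
- by move=> x _; rewrite lee_fin.
Qed.

Lemma int_cst (c : R) : \int[P]_x c%:E = c%:E.
Proof.
have := integral_cst P (@measurableT _ T) c%:E.
rewrite /cst => ->.
exact: (etrans (congr1 (fun z => c%:E * z) (probability_setT P))) (mule1 _).
Qed.

Lemma int_ge0 (f : T -> R) : (forall x, (0 <= f x)%R) -> 0 <= \int[P]_x (f x)%:E.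
Proof. by move=> f0; apply: integral_ge0 => x _; rewrite lee_fin. Qed.

Lemma int_fin (f : T -> R) (c : R) : measurable_fun setT f ->
  (forall x, (0 <= f x <= c)%R) -> \int[P]_x (f x)%:E \is a fin_num.
Proof.
move=> mf hf; rewrite ge0_fin_numE; last by apply: int_ge0 => x; case/andP: (hf x).
apply: (le_lt_trans (int_le _ (fun=> c) mf (measurable_cst _) _ _)).
- by move=> x; case/andP: (hf x).
- by move=> x; case/andP: (hf x).
by rewrite int_cst ltry.
Qed.


Local Close Scope ereal_scope.

Section LPS.
Context {Y : finType} {K C : nat}.
Implicit Types (r rh : T -> Y -> R) (g : T -> 'I_K -> R) (yc : 'I_C -> Y)
  (Ic : 'I_C -> {set 'I_K}).

Lemma feas01 {g yc Ic alpha pi} : lp_feasible P g yc Ic alpha pi ->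
  forall y, bm (fun x => pi x y) /\ (forall x, 0 <= pi x y <= 1).
Proof.
case=> p0 p1 pm _ y; split.
  split => //; exists 1 => x.
  rewrite ger0_norm // -(p1 x) (bigD1 y) //= lerDl.
  by apply: sumr_ge0 => i _.
move=> x; rewrite p0 /= -(p1 x) (bigD1 y) //= lerDl.
by apply: sumr_ge0 => i _.
Qed.

Lemma bm_r r : (forall x y, 0 <= r x y) -> (exists M : R, forall x y, r x y <= M) ->
  (forall y, measurable_fun setT (fun x => r x y)) -> forall y, bm (fun x => r x y).
Proof.
move=> r0 [M hM] rm y; split => //; exists M => x.
by rewrite ger0_norm.
Qed.


Lemma fin_sand (x y : \bar R) : (0 <= x)%E -> (x <= y)%E -> y \is a fin_num -> x \is a fin_num.
Proof.
move=> x0 xy /fin_numPlt/andP[_ yoo]; rewrite ge0_fin_numE //.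
exact: le_lt_trans xy yoo.
Qed.

Lemma final_arith (A B Cf D E : T -> R) (c : R) :
  measurable_fun setT A -> measurable_fun setT B -> measurable_fun setT Cf ->
  measurable_fun setT D -> measurable_fun setT E ->
  (forall x, 0 <= A x) -> (forall x, 0 <= B x) -> (forall x, 0 <= Cf x) ->
  (forall x, 0 <= D x) -> (forall x, 0 <= E x) ->
  (forall x, A x + B x <= Cf x + D x + E x) ->
  (forall x, B x <= Cf x + E x) ->
  (forall x, A x <= c) -> (forall x, Cf x <= c) ->
  (\int[P]_x (D x)%:E <= \int[P]_x (B x)%:E)%E ->
  (\int[P]_x (E x)%:E)%E \is a fin_num ->
  (\int[P]_x (A x)%:E <= \int[P]_x (Cf x)%:E + \int[P]_x (E x)%:E)%E.
Proof.
move=> mA mB mC mD mE A0 B0 C0 D0 E0 h1 h3 Ac Cc h2 fE.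
have mCD : measurable_fun setT (fun x => Cf x + D x) by exact: measurable_funD.
have mCE : measurable_fun setT (fun x => Cf x + E x) by exact: measurable_funD.
have h1' := int_le _ _ (measurable_funD mA mB) (measurable_funD mCD mE)
  (fun x => addr_ge0 (A0 x) (B0 x)) h1.
rewrite !int_add // in h1'; last by move=> x; exact: addr_ge0.
have h3' := int_le _ _ mB mCE B0 h3.
rewrite int_add // in h3'.
have fA : (\int[P]_x (A x)%:E)%E \is a fin_num.
  by apply: (int_fin _ c) => // x; rewrite A0 Ac.
have fC : (\int[P]_x (Cf x)%:E)%E \is a fin_num.
  by apply: (int_fin _ c) => // x; rewrite C0 Cc.
have fB : (\int[P]_x (B x)%:E)%E \is a fin_num.
  by apply: fin_sand h3' _; [exact: int_ge0| rewrite fin_numD fC fE].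
have fD : (\int[P]_x (D x)%:E)%E \is a fin_num.
  by apply: fin_sand h2 fB; exact: int_ge0.
move: h1' h2 h3'.
rewrite -(fineK fA) -(fineK fB) -(fineK fC) -(fineK fD) -(fineK fE).
rewrite -!EFinD !lee_fin; lra.
Qed.


Lemma opt_ge0 r g yc Ic alpha : (forall x y, 0 <= r x y) ->
  (0 <= lp_opt P r g yc Ic alpha)%E.
Proof.
move=> r0; apply/ereal_infP => _ [pi [p0 _ _ _] <-].
by apply: int_ge0 => x; apply: sumr_ge0 => y _; exact: mulr_ge0.
Qed.

Lemma meas_rp r pi : (forall y, measurable_fun setT (fun x => r x y)) ->
  (forall y, measurable_fun setT (fun x => pi x y)) ->
  measurable_fun setT (fun x => \sum_(y : Y) r x y * pi x y).
Proof. by move=> rm pm; apply: measurable_sum => y; exact: measurable_funM. Qed.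

Lemma part1 r rh g yc Ic alpha pih :
  (forall x y, 0 <= r x y) -> (exists M : R, forall x y, r x y <= M) ->
  (forall y, measurable_fun setT (fun x => r x y)) ->
  (forall x y, 0 <= rh x y) -> (forall y, measurable_fun setT (fun x => rh x y)) ->
  lp_minimizer P rh g yc Ic alpha pih ->
  (lp_obj P r pih <= lp_opt P r g yc Ic alpha + eps_r P rh r)%E.
Proof.
move=> r0 [M hM] rm rh0 rhm [fh hmin].
have mE : measurable_fun setT (fun x => \sum_(y : Y) `|rh x y - r x y|).
  by apply: measurable_sum => y; apply: measurableT_comp => //; exact: measurable_funB.
have E0 x : 0 <= \sum_(y : Y) `|rh x y - r x y| by apply: sumr_ge0.
have e0 : (0 <= eps_r P rh r)%E by exact: int_ge0.
have o0 := opt_ge0 r g yc Ic alpha r0.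
case: (eqVneq (eps_r P rh r) +oo%E) => [->|ene].
  rewrite addey ?leey //; apply: contraTneq o0 => ->; by [].
have efin : eps_r P rh r \is a fin_num.
  by rewrite ge0_fin_numE // lt_neqAle ene leey.
apply: le_inf_add => // _ [pi hpi <-].
have hp := feas01 hpi; have hph := feas01 fh.
have pm y := (hp y).1.1; have phm y := (hph y).1.1.
have p01 x y := (hp y).2 x; have ph01 x y := (hph y).2 x.
apply: (@final_arith _ (fun x => \sum_(y : Y) rh x y * pi x y) _
   (fun x => \sum_(y : Y) rh x y * pih x y) _ (\sum_(y : Y) M)).
- exact: meas_rp.
- exact: meas_rp.
- exact: meas_rp.
- exact: meas_rp.
- exact: mE.
- move=> x; apply: sumr_ge0 => y _; apply: mulr_ge0 => //; by case/andP: (ph01 x y).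
- move=> x; apply: sumr_ge0 => y _; apply: mulr_ge0 => //; by case/andP: (p01 x y).
- move=> x; apply: sumr_ge0 => y _; apply: mulr_ge0 => //; by case/andP: (p01 x y).
- move=> x; apply: sumr_ge0 => y _; apply: mulr_ge0 => //; by case/andP: (ph01 x y).
- exact: E0.
- move=> x; rewrite -!big_split /=; apply: ler_sum => y _.
  have /andP[a0 a1] := ph01 x y; have /andP[b0 b1] := p01 x y.
  have h : (r x y - rh x y) * (pih x y - pi x y) <= `|rh x y - r x y|.
    apply: le_trans (ler_norm _) _; rewrite normrM distrC -[X in _ <= X]mulr1.
    by apply: ler_wpM2l => //; rewrite ler_norml; apply/andP; split; lra.
  nra.
- move=> x; rewrite -big_split /=; apply: ler_sum => y _.
  have /andP[b0 b1] := p01 x y.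
  have h : (rh x y - r x y) * pi x y <= `|rh x y - r x y|.
    apply: le_trans (ler_norm _) _; rewrite normrM -[X in _ <= X]mulr1.
    by apply: ler_wpM2l => //; rewrite ger0_norm.
  nra.
- move=> x; apply: ler_sum => y _; have /andP[a0 a1] := ph01 x y.
  have := hM x y; have := r0 x y; nra.
- move=> x; apply: ler_sum => y _; have /andP[a0 a1] := p01 x y.
  have := hM x y; have := r0 x y; nra.
- exact: hmin.
- exact: efin.
Qed.


Lemma sum_delta (y0 : Y) : \sum_(y : Y) ((y == y0)%:R : R) = 1.
Proof. by rewrite (bigD1 y0) //= eqxx big1 ?addr0 // => y /negbTE ->. Qed.

Lemma T_inhabited : exists x0 : T, True.
Proof.
apply: contrapT => hn.
have h : P setT = 0%E.
  rewrite (_ : setT = set0) ?measure0 //; apply/seteqP; split => x //= _.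
  by apply: hn; exists x.
have := etrans (esym (probability_setT P)) h.
by move/(congr1 fine)/eqP; rewrite /= oner_eq0.
Qed.

Lemma sup_norm_ub r : (exists M : R, forall x y, r x y <= M) ->
  forall x y, r x y <= sup_norm r.
Proof.
move=> [M hM] x y; apply: ub_le_sup.
  by exists M => _ [x' _ [y' _ <-]].
by exists x => //; exists y.
Qed.

Lemma eps_k G H : bm G -> bm H -> (forall x, 0 <= H x) ->
  0 < Ex P G -> 0 < Ex P H ->
  Ex P (fun x => `|nrm H x - nrm G x|) <= 2 * Ex P (fun x => `|H x - G x|) / Ex P G.
Proof.
move=> bG bH H0 hG hH.
set a := Ex P H; set b := Ex P G.
have bHG : bm (fun x => `|H x - G x|) by apply: bm_norm; exact: bmB.
apply: (le_trans (Ex_le _ (fun x => H x * `|a^-1 - b^-1| + `|H x - G x| * b^-1) _ _ _)).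
- by apply: bm_norm; apply: bmB; exact: bm_nrm.
- by apply: bmD; apply: bmM => //; exact: bm_cst.
- move=> x; rewrite /nrm -/a -/b.
  have -> : H x / a - G x / b = H x * (a^-1 - b^-1) + (H x - G x) * b^-1 by ring.
  apply: le_trans (ler_normD _ _) _.
  by rewrite !normrM (ger0_norm (H0 x)) (@ger0_norm _ b^-1); last by rewrite invr_ge0 ltW.
rewrite ExD; [|by apply: bmM => //; exact: bm_cst|by apply: bmM => //; exact: bm_cst].
rewrite !ExZr // -/a.
have e1 : a * `|a^-1 - b^-1| = `|b - a| / b.
  have gen (u v : R) : 0 < u -> 0 < v -> u * `|u^-1 - v^-1| = `|v - u| / v.
    move=> u0 v0.
    rewrite -{1}(ger0_norm (ltW u0)) -normrM -[X in _ = _ / X](ger0_norm (ltW v0)) -normfV -normrM.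
    congr `|_|; field; apply/andP; split; rewrite gt_eqF //.
  exact: gen.
have e2 : `|b - a| <= Ex P (fun x => `|H x - G x|).
  rewrite /a /b -ExB //; apply: le_trans (Ex_norm _ _) _; first exact: bmB.
  by apply: Ex_le => //; [apply: bm_norm; exact: bmB| move=> x; rewrite distrC].
rewrite e1.
have hb : 0 <= b^-1 by rewrite invr_ge0 ltW.
set E := Ex P _ in e2 *.
have h : `|b - a| * b^-1 <= E * b^-1 by apply: ler_wpM2r.
have -> : 2 * E / b = E / b + E / b by ring.
move: h; rewrite /(_ / _); lra.
Qed.


Lemma mix_Ex G p s w : bm G -> 0 < Ex P G -> bm p ->
  Ex P (fun x => nrm G x * (s * p x + w)) = s * Ex P (fun x => nrm G x * p x) + w.
Proof.
move=> bG hG bp; have bn := bm_nrm _ bG.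
rewrite (Ex_ext (fun x => nrm G x * (s * p x + w)) (fun x => s * (nrm G x * p x) + nrm G x * w)); last by move=> x; ring.
rewrite ExD; [|by apply: bmM; [exact: bm_cst|exact: bmM bn bp]|by apply: bmM => //; exact: bm_cst].
rewrite ExZ; last exact: bmM bn bp.
by rewrite ExZr // Ex_nrm // mul1r.
Qed.

Lemma bm_col {G : T -> 'I_K -> R} : (forall x k, 0 <= G x k <= 1) ->
  (forall k, measurable_fun setT (fun x => G x k)) -> forall k, bm (fun x => G x k).
Proof.
move=> h m k; split => //; exists 1 => x.
by have /andP[a b] := h x k; rewrite ger0_norm.
Qed.

Lemma part2obj r g (gh : T -> 'I_K -> R) yc Ic alpha (pih : T -> Y -> R) :
  (forall x y, 0 <= r x y) -> (exists M : R, forall x y, r x y <= M) ->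
  (forall y, measurable_fun setT (fun x => r x y)) ->
  (forall x k, 0 <= g x k <= 1) -> (forall k, measurable_fun setT (fun x => g x k)) ->
  (forall k, 0 < Ex P (fun x => g x k)) ->
  (forall x k, 0 <= gh x k <= 1) -> (forall k, measurable_fun setT (fun x => gh x k)) ->
  (forall k, 0 < Ex P (fun x => gh x k)) ->
  0 <= alpha <= 1 ->
  lp_minimizer P r gh yc Ic alpha pih ->
  (lp_obj P r pih <= lp_opt P r g yc Ic alpha
     + (2 * sup_norm r * Num.min (1 - alpha) (eps_g P gh g / (alpha + eps_g P gh g)))%:E)%E.
Proof.
move=> r0 rbdd rm g01 gm Eg gh01 ghm Egh a01 [fh hmin].
have /andP[al0 al1] := a01.
set eps := eps_g P gh g.
have bg := bm_col g01 gm; have bgh := bm_col gh01 ghm.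
have eps0 : 0 <= eps by apply/bigmax_geP; left.
have epsk k : Ex P (fun x => `|nrm (fun z => gh z k) x - nrm (fun z => g z k) x|) <= eps.
  exact: (le_bigmax 0 (fun k => Ex P (fun x => `|nrm (fun z => gh z k) x - nrm (fun z => g z k) x|)) k).
have [x0 _] := T_inhabited.
have [y0 _] : exists y0 : Y, True.
  case: fh => _ p1 _ _; have := p1 x0.
  case: (pickP (@predT Y)) => [y0 _|h]; first by exists y0.
  by rewrite big_pred0 // => /esym/eqP; rewrite oner_eq0.
have hS := sup_norm_ub _ rbdd; set S := sup_norm r in hS *.
have S0 : 0 <= S := le_trans (r0 x0 y0) (hS x0 y0).
set t := Num.min (1 - alpha) (eps / (alpha + eps)).
have t0 : 0 <= t by rewrite le_min subr_ge0 al1 /= divr_ge0 // addr_ge0.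
have t1 : t <= 1 - alpha by rewrite ge_min lexx.
apply: le_inf_add => [//|_ [pi hpi <-]].
pose pi' := fun x y => (1 - t) * pi x y + t * (y == y0)%:R.
have hp := feas01 hpi.
have hpi' : lp_feasible P gh yc Ic alpha pi'.
  case: hpi => _ p1 _ [q hq].
  have key c k Q : k \in Ic c ->
     `|Ex P (fun x => gh x k / Ex P (fun z => gh z k) * pi' x (yc c))
        - ((1 - t) * Q + t * (yc c == y0)%:R)|
     = (1 - t) * `|Ex P (fun x => nrm (fun z => gh z k) x * pi x (yc c)) - Q|.
    move=> _.
    have -> : Ex P (fun x => gh x k / Ex P (fun z => gh z k) * pi' x (yc c))
       = (1 - t) * Ex P (fun x => nrm (fun z => gh z k) x * pi x (yc c)) + t * (yc c == y0)%:R.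
      exact: (mix_Ex (fun z => gh z k) (fun x => pi x (yc c))) (hp _).1.
    have -> : forall a b : R, (1 - t) * a + b - ((1 - t) * Q + b) = (1 - t) * (a - Q).
      by move=> a b; ring.
    by rewrite normrM ger0_norm //; lra.
  split.
  - move=> x y; rewrite /pi'; have /andP[a b] := (hp y).2 x.
    by apply: addr_ge0; apply: mulr_ge0 => //; lra.
  - move=> x; rewrite /pi' big_split /= -!mulr_sumr p1 sum_delta; ring.
  - move=> y; rewrite /pi'; apply: measurable_funD; last exact: measurable_cst.
    apply: measurable_funM; [exact: measurable_cst| exact: (hp y).1.1].
  case: (leP (1 - alpha) (eps / (alpha + eps))) => ht.
  + have tE : t = 1 - alpha by rewrite /t min_l.
    exists (fun c => (1 - t) * 2^-1 + t * (yc c == y0)%:R) => c k hk.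
    rewrite key //.
    have /andP[v0 v1] := nrm_p01 _ _ (bgh k) (Egh k) (fun x => (proj1 (andP (gh01 x k)))) (hp (yc c)).1 (hp (yc c)).2.
    rewrite tE (_ : 1 - (1 - alpha) = alpha); last by ring.
    have : `|Ex P (fun x => nrm (fun z => gh z k) x * pi x (yc c)) - 2^-1| <= 2^-1.
      by rewrite ler_norml; apply/andP; split; lra.
    move=> h; have := ler_wpM2l al0 h; lra.
  + have tE : t = eps / (alpha + eps) by rewrite /t min_r // ltW.
    exists (fun c => (1 - t) * q c + t * (yc c == y0)%:R) => c k hk.
    rewrite key //.
    have h1 := hq c k hk.
    have h2 := vw_lemma _ _ _ (bg k) (bgh k) (Eg k) (Egh k) (hp (yc c)).1 (hp (yc c)).2.
    have h3 := epsk k.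
    have hv : `|Ex P (fun x => nrm (fun z => gh z k) x * pi x (yc c)) - q c| <= (eps + alpha) / 2.
      change (Ex P (fun x => nrm (fun z => g z k) x * pi x (yc c))) with
        (Ex P (fun x => g x k / Ex P (fun z => g z k) * pi x (yc c))) in h2.
      move: h1 h2 h3.
      set v := Ex P (fun x => nrm (fun z => gh z k) x * pi x (yc c)).
      set w := Ex P (fun x => g x k / Ex P (fun z => g z k) * pi x (yc c)).
      set E := Ex P (fun x => `|_|).
      rewrite !ler_norml => /andP[a1 a2] /andP[b1 b2] h3; apply/andP; split; lra.
    have k2 : (1 - t) * ((eps + alpha) / 2) = alpha / 2.
      rewrite tE; have [z|nz] := eqVneq (alpha + eps) 0.
        have a0 : alpha = 0 by lra.
        have e0 : eps = 0 by lra.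
        by rewrite z invr0 mulr0 a0 e0; ring.
      by field.
    rewrite -k2; apply: ler_wpM2l => //; lra.
apply: (le_trans (hmin pi' hpi')).
have hp' := feas01 hpi'.
apply: (@le_trans _ _ (lp_obj P r pi + (t * S)%:E)%E).
  rewrite /lp_obj -int_cst -int_add; first last.
  - by move=> x; apply: mulr_ge0.
  - by move=> x; apply: sumr_ge0 => y _; apply: mulr_ge0 => //; case/andP: ((hp y).2 x).
  - exact: measurable_cst.
  - by apply: meas_rp => // y; exact: (hp y).1.1.
  apply: int_le.
  - by apply: meas_rp => // y; exact: (hp' y).1.1.
  - apply: measurable_funD; last exact: measurable_cst.
    by apply: meas_rp => // y; exact: (hp y).1.1.
  - by move=> x; apply: sumr_ge0 => y _; apply: mulr_ge0 => //; case/andP: ((hp' y).2 x).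
  move=> x.
  apply: (@le_trans _ _ (\sum_(y : Y) (r x y * pi x y + t * S * (y == y0)%:R))).
    apply: ler_sum => y _; rewrite /pi'.
    have /andP[a b] := (hp y).2 x; have := hS x y; have := r0 x y.
    have dl : 0 <= ((y == y0)%:R : R) <= 1 by case: (y == y0) => /=; rewrite ?lexx ?ler01.
    move: dl => /andP[d0 d1].
    set dd := ((y == y0)%:R : R); move=> h0 h1.
    have e1 : 0 <= t * (r x y * pi x y) by apply: mulr_ge0 => //; apply: mulr_ge0.
    have e2 : 0 <= t * dd * (S - r x y) by apply: mulr_ge0; [apply: mulr_ge0|lra].
    have -> : r x y * ((1 - t) * pi x y + t * dd) = r x y * pi x y - t * (r x y * pi x y) + t * dd * r x y by ring.
    have -> : t * S * dd = t * dd * S by ring.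
    have : t * dd * (S - r x y) = t * dd * S - t * dd * r x y by ring.
    lra.
  by rewrite big_split /= -mulr_sumr sum_delta mulr1.
rewrite leeD2l // lee_fin.
have : 0 <= t * S by apply: mulr_ge0.
have : t * S <= 2 * S * t.
  by rewrite mulrC -[X in X <= _]mul1r -mulrA ler_wpM2r ?ler1n // mulr_ge0.
done.
Qed.


Lemma part2fair g (gh : T -> 'I_K -> R) yc Ic alpha (pih : T -> Y -> R) :
  (forall x k, 0 <= g x k <= 1) -> (forall k, measurable_fun setT (fun x => g x k)) ->
  (forall k, 0 < Ex P (fun x => g x k)) ->
  (forall x k, 0 <= gh x k <= 1) -> (forall k, measurable_fun setT (fun x => gh x k)) ->
  (forall k, 0 < Ex P (fun x => gh x k)) ->
  lp_feasible P gh yc Ic alpha pih ->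
  forall c k k', k \in Ic c -> k' \in Ic c ->
  `| Ex P (fun x => (g x k / Ex P (fun z => g z k)
                     - g x k' / Ex P (fun z => g z k')) * pih x (yc c)) |
    <= Num.min 1 (alpha + eps_g P gh g).
Proof.
move=> g01 gm Eg gh01 ghm Egh fh c k k' hk hk'.
set eps := eps_g P gh g.
have bg := bm_col g01 gm; have bgh := bm_col gh01 ghm.
have epsk j : Ex P (fun x => `|nrm (fun z => gh z j) x - nrm (fun z => g z j) x|) <= eps.
  exact: (le_bigmax 0 (fun k => Ex P (fun x => `|nrm (fun z => gh z k) x - nrm (fun z => g z k) x|)) j).
have hp := feas01 fh.
case: fh => _ _ _ [q hq].
have bp := (hp (yc c)).1; have p01 := (hp (yc c)).2.
have -> : Ex P (fun x => (g x k / Ex P (fun z => g z k)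
                     - g x k' / Ex P (fun z => g z k')) * pih x (yc c))
  = Ex P (fun x => nrm (fun z => g z k) x * pih x (yc c))
    - Ex P (fun x => nrm (fun z => g z k') x * pih x (yc c)).
  rewrite -ExB; [|apply: bmM => //; exact: bm_nrm|apply: bmM => //; exact: bm_nrm].
  by apply: Ex_ext => x; rewrite /nrm mulrBl.
have g0 j x : 0 <= g x j by case/andP: (g01 x j).
have gh0 j x : 0 <= gh x j by case/andP: (gh01 x j).
have /andP[w0 w1] := nrm_p01 _ _ (bg k) (Eg k) (g0 k) bp p01.
have /andP[w0' w1'] := nrm_p01 _ _ (bg k') (Eg k') (g0 k') bp p01.
have h1 := vw_lemma _ _ _ (bg k) (bgh k) (Eg k) (Egh k) bp p01.
have h1' := vw_lemma _ _ _ (bg k') (bgh k') (Eg k') (Egh k') bp p01.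
have h2 := hq c k hk; have h2' := hq c k' hk'.
have h3 := epsk k; have h3' := epsk k'.
change (Ex P (fun x => gh x k / Ex P (fun z => gh z k) * pih x (yc c))) with
  (Ex P (fun x => nrm (fun z => gh z k) x * pih x (yc c))) in h2.
change (Ex P (fun x => gh x k' / Ex P (fun z => gh z k') * pih x (yc c))) with
  (Ex P (fun x => nrm (fun z => gh z k') x * pih x (yc c))) in h2'.
move: w0 w1 w0' w1' h1 h1' h2 h2' h3 h3'.
set v := Ex P (fun x => nrm (fun z => gh z k) x * pih x (yc c)).
set v' := Ex P (fun x => nrm (fun z => gh z k') x * pih x (yc c)).
set w := Ex P (fun x => nrm (fun z => g z k) x * pih x (yc c)).
set w' := Ex P (fun x => nrm (fun z => g z k') x * pih x (yc c)).
set E := Ex P (fun x => `|nrm (fun z => gh z k) x - _|).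
set E' := Ex P (fun x => `|nrm (fun z => gh z k') x - _|).
move=> w0 w1 w0' w1' h1 h1' h2 h2' h3 h3'.
move: h1 h1' h2 h2'; rewrite !ler_norml => /andP[a1 a2] /andP[b1 b2] /andP[c1 c2] /andP[d1 d2].
rewrite lerNl !le_min; repeat (apply/andP; split); lra.
Qed.

Lemma eps_bound g (gh : T -> 'I_K -> R) :
  (forall x k, 0 <= g x k <= 1) -> (forall k, measurable_fun setT (fun x => g x k)) ->
  (forall k, 0 < Ex P (fun x => g x k)) ->
  (forall x k, 0 <= gh x k <= 1) -> (forall k, measurable_fun setT (fun x => gh x k)) ->
  (forall k, 0 < Ex P (fun x => gh x k)) ->
  eps_g P gh g <= \big[Num.max/0]_(k < K)
              (2 * Ex P (fun x => `|gh x k - g x k|) / Ex P (fun x => g x k)).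
Proof.
move=> g01 gm Eg gh01 ghm Egh.
have bg := bm_col g01 gm; have bgh := bm_col gh01 ghm.
apply: le_bigmax2 => k _.
exact: (eps_k _ _ (bg k) (bgh k) (fun x => proj1 (andP (gh01 x k))) (Eg k) (Egh k)).
Qed.

End LPS.
End H.

Theorem theorem2 (d : measure_display) (T : measurableType d) (R : realType)
  (Y : finType) (K C : nat) (P : probability T R)
  (r : T -> Y -> R) (g : T -> 'I_K -> R)
  (yc : 'I_C -> Y) (Ic : 'I_C -> {set 'I_K}) (alpha : R)
  (r_ge0 : forall x y, 0 <= r x y)
  (r_bdd : exists M : R, forall x y, r x y <= M)
  (r_meas : forall y, measurable_fun setT (fun x => r x y))
  (g_01 : forall x k, 0 <= g x k <= 1)
  (g_meas : forall k, measurable_fun setT (fun x => g x k))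
  (Eg_gt0 : forall k, 0 < Ex P (fun x => g x k))
  (alpha_01 : 0 <= alpha <= 1) :
  (* Part 1 *)
  (forall (rh : T -> Y -> R),
     (forall x y, 0 <= rh x y) ->
     (forall y, measurable_fun setT (fun x => rh x y)) ->
     forall pih : T -> Y -> R,
       lp_minimizer P rh g yc Ic alpha pih ->
       (lp_obj P r pih <= lp_opt P r g yc Ic alpha + eps_r P rh r)%E)
  /\
  (* Part 2 *)
  (forall (gh : T -> 'I_K -> R),
     (forall x k, 0 <= gh x k <= 1) ->
     (forall k, measurable_fun setT (fun x => gh x k)) ->
     (forall k, 0 < Ex P (fun x => gh x k)) ->
     let eps := eps_g P gh g in
     eps <= \big[Num.max/0]_(k < K)
              (2 * Ex P (fun x => `|gh x k - g x k|) / Ex P (fun x => g x k))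
     /\
     forall pih : T -> Y -> R,
       lp_minimizer P r gh yc Ic alpha pih ->
       (lp_obj P r pih <= lp_opt P r g yc Ic alpha
          + (2 * sup_norm r * Num.min (1 - alpha) (eps / (alpha + eps)))%:E)%E
       /\
       (forall c k k', k \in Ic c -> k' \in Ic c ->
          `| Ex P (fun x => (g x k / Ex P (fun z => g z k)
                             - g x k' / Ex P (fun z => g z k')) * pih x (yc c)) |
            <= Num.min 1 (alpha + eps))).
Proof.
split.
  move=> rh rh0 rhm pih hmin.
  exact: (part1 P r rh g yc Ic alpha pih r_ge0 r_bdd r_meas rh0 rhm hmin).
move=> gh gh01 ghm Egh eps; split.
  exact: eps_bound.
move=> pih hmin; split.
  exact: part2obj.
move=> c k k' hk hk'.
exact: (part2fair P g gh yc Ic alpha pih g_01 g_meas Eg_gt0 gh01 ghm Egh hmin.1 c k k' hk hk').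
Qed.
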